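(* For every odd integer $T=2k+1\ge 5$ and every $\sigma\in\mathfrak S_3$, the vector $\sigma c$ with $c=[1,1,-1,-1,1,1]$ defines a facet of $P^T$.
   Context: For an integer $T\ge 2$, let $\Omega_T$ be the set of words $w=s_1s_2\cdots s_T$ over $\{1,2,3\}$ with $s_l\neq s_{l+1}$ for $l=1,\dots,T-1$. For $w\in\Omega_T$ and an ordered pair $ij$, $i\neq j$, let $x_{ij}(w)$ be the number of indices $1\le l\le T-1$ with $s_ls_{l+1}=ij$. Vectors of $\mathbb R^6$ are indexed in the order $[x_{12},x_{13},x_{21},x_{23},x_{31},x_{32}]$. Let $a_w=[x_{12}(w),\dots,x_{32}(w)]$ and $P^T=\mathrm{conv}\{a_w:w\in\Omega_T\}$. $\mathfrak S_3$ acts on $\mathbb R^6$ by $(\sigma c)_{ij}=c_{\sigma(i)\sigma(j)}$. A vector $c$ defines a facet of $P^T$ if $c\cdot a_w\ge0$ for all $w\in\Omega_T$ and $\{x\in P^T: c\cdot x=0\}$ is a facet of $P^T$. *)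

(* Defs.v *)
From mathcomp Require Import all_boot all_order all_algebra all_fingroup.
Set Implicit Arguments. Unset Strict Implicit. Unset Printing Implicit Defensive.
Import Order.TTheory GRing.Theory Num.Theory.
Local Open Scope ring_scope.

(* Letters 1,2,3 are encoded as the elements 0,1,2 of 'I_3. *)

Definition omega (T : nat) (w : T.-tuple 'I_3) : bool :=
  [forall l : 'I_T, (l.+1 < T)%N ==> (tnth w l != nth ord0 w l.+1)].

Definition xcount (T : nat) (i j : 'I_3) (w : T.-tuple 'I_3) : nat :=
  \sum_(l < T.-1) ((nth ord0 w l == i) && (nth ord0 w l.+1 == j)).

(* coordinate order [x12, x13, x21, x23, x31, x32] *)
Definition l1 : 'I_3 := @Ordinal 3 0 isT.
Definition l2 : 'I_3 := @Ordinal 3 1 isT.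
Definition l3 : 'I_3 := @Ordinal 3 2 isT.

Definition pair_of (k : 'I_6) : 'I_3 * 'I_3 :=
  match val k with
  | 0 => (l1, l2) | 1 => (l1, l3) | 2 => (l2, l1)
  | 3 => (l2, l3) | 4 => (l3, l1) | _ => (l3, l2) end.

Definition idx_of (i j : 'I_3) : 'I_6 :=
  odflt ord0 [pick k : 'I_6 | pair_of k == (i, j)].

Definition avec (R : nzRingType) (T : nat) (w : T.-tuple 'I_3) : 'rV[R]_6 :=
  \row_k (xcount (pair_of k).1 (pair_of k).2 w)%:R.

Definition PT (R : realFieldType) (T : nat) : 'rV[R]_6 -> Prop :=
  fun x => exists lam : T.-tuple 'I_3 -> R,
    (forall w, 0 <= lam w) /\
    \sum_(w | omega w) lam w = 1 /\
    x = \sum_(w | omega w) lam w *: @avec R _ w.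

Definition sact (R : nzRingType) (s : 'S_3) (c : 'rV[R]_6) : 'rV[R]_6 :=
  \row_k c 0 (idx_of (s (pair_of k).1) (s (pair_of k).2)).

Definition dotv (R : nzRingType) (c x : 'rV[R]_6) : R := \sum_k c 0 k * x 0 k.

Definition aff_indep (R : nzRingType) (m : nat) (p : 'I_m -> 'rV[R]_6) : Prop :=
  forall mu : 'I_m -> R,
    \sum_i mu i = 0 -> \sum_i mu i *: p i = 0 -> forall i, mu i = 0.

(* aff_size S n : the maximal number of affinely independent points of S is n,
   i.e. S has affine dimension n - 1 (n = 0 iff S is empty). *)
Definition aff_size (R : nzRingType) (S : 'rV[R]_6 -> Prop) (n : nat) : Prop :=
  (exists p : 'I_n -> 'rV[R]_6, (forall i, S (p i)) /\ aff_indep p) /\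
  (forall p : 'I_n.+1 -> 'rV[R]_6, (forall i, S (p i)) -> ~ aff_indep p).

Definition defines_facet (R : realFieldType) (T : nat) (c : 'rV[R]_6) : Prop :=
  (forall w : T.-tuple 'I_3, omega w -> 0 <= dotv c (@avec R _ w)) /\
  exists m : nat,
    aff_size (@PT R T) m.+1 /\
    aff_size (fun x => @PT R T x /\ dotv c x = 0) m.

Definition c7 (R : nzRingType) : 'rV[R]_6 :=
  \row_k [:: 1; 1; -1; -1; 1; 1]`_k.

(* Main.v *)
Require Import Defs.
From mathcomp Require Import all_boot all_order all_algebra all_fingroup.
From mathcomp Require Import ring lra zify.
Set Implicit Arguments. Unset Strict Implicit. Unset Printing Implicit Defensive.
Import Order.TTheory GRing.Theory Num.Theory.
Local Open Scope ring_scope.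

Lemma ord3P (a : 'I_3) : [\/ a = l1, a = l2 | a = l3].
Proof.
case: a => [[|[|[|m]]] Hm] //.
- by apply: Or31; apply: val_inj.
- by apply: Or32; apply: val_inj.
- by apply: Or33; apply: val_inj.
Qed.

Definition back (p : 'I_3 * 'I_3) : nat :=
  match val p.1, val p.2 with
  | 0, 1 => 0 | 0, 2 => 1 | 1, 0 => 2 | 1, 2 => 3 | 2, 0 => 4 | _, _ => 5 end%N.

Lemma backK (k : 'I_6) : back (pair_of k) = val k.
Proof. by case: k => [[|[|[|[|[|[|m]]]]]] Hm]. Qed.

Lemma pair_inj : injective pair_of.
Proof. by move=> k k' e; apply: val_inj; rewrite -!backK e. Qed.

Lemma pair_neq (k : 'I_6) : (pair_of k).1 != (pair_of k).2.
Proof. by case: k => [[|[|[|[|[|[|m]]]]]] Hm]. Qed.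

Lemma pair_surj (u v : 'I_3) : u != v -> exists k, pair_of k = (u, v).
Proof.
case: (ord3P u) => ->; case: (ord3P v) => -> // _.
- by exists (@Ordinal 6 0 isT).
- by exists (@Ordinal 6 1 isT).
- by exists (@Ordinal 6 2 isT).
- by exists (@Ordinal 6 3 isT).
- by exists (@Ordinal 6 4 isT).
- by exists (@Ordinal 6 5 isT).
Qed.

Lemma idx_pair k : idx_of (pair_of k).1 (pair_of k).2 = k.
Proof.
rewrite /idx_of; case: pickP => [k' /eqP|/(_ k)]; last by rewrite -surjective_pairing eqxx.
by rewrite -surjective_pairing => /pair_inj.
Qed.

Lemma pair_idx u v : u != v -> pair_of (idx_of u v) = (u, v).
Proof.
by case/pair_surj=> k e; have := idx_pair k; rewrite e /= => ->.
Qed.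

Lemma sum6 (R : nmodType) (F : 'I_3 -> 'I_3 -> R) :
  \sum_(k < 6) F (pair_of k).1 (pair_of k).2 =
  F l1 l2 + F l1 l3 + F l2 l1 + F l2 l3 + F l3 l1 + F l3 l2.
Proof. by rewrite !big_ord_recl big_ord0 /= addr0 !addrA. Qed.


Lemma sumabc' (R : comNzRingType) (F : 'I_3 -> 'I_3 -> R) a b c :
  a != b -> a != c -> b != c ->
  \sum_(k < 6) F (pair_of k).1 (pair_of k).2 =
  F a b + F a c + F b a + F b c + F c a + F c b.
Proof.
rewrite sum6.
by case: (ord3P a) => ->; case: (ord3P b) => ->; case: (ord3P c) => -> //= _ _ _; ring.
Qed.
Lemma c7idx (R : nzRingType) x y : x != y ->
  (c7 R) 0 (idx_of x y) = if x == l2 then -1 else 1.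
Proof.
move=> nxy; rewrite mxE; have := backK (idx_of x y); rewrite pair_idx // => <-.
by move: nxy; case: (ord3P x) => ->; case: (ord3P y) => ->.
Qed.

Definition g (R : nzRingType) (s : 'S_3) (x : 'I_3) : R := if s x == l2 then -1 else 1.

Lemma sactE (R : nzRingType) s k : (sact s (c7 R)) 0 k = g R s (pair_of k).1.
Proof.
by rewrite mxE c7idx // (inj_eq perm_inj) pair_neq.
Qed.

Lemma keysum (R : comNzRingType) (h : 'I_3 -> R) x y :
  \sum_(k < 6) h (pair_of k).1 * ((x == (pair_of k).1) && (y == (pair_of k).2))%:R
  = if x != y then h x else 0.
Proof.
rewrite (sum6 (fun u v => h u * ((x == u) && (y == v))%:R)).
by case: (ord3P x) => ->; case: (ord3P y) => -> /=; ring.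
Qed.
Lemma dot_avec (R : comNzRingType) T (w : T.-tuple 'I_3) (h : 'I_3 -> R) :
  \sum_(k < 6) h (pair_of k).1 * (avec R w) 0 k =
  \sum_(l < T.-1) (if nth ord0 w l != nth ord0 w l.+1 then h (nth ord0 w l) else 0).
Proof.
under eq_bigr do rewrite mxE /xcount natr_sum mulr_sumr.
rewrite exchange_big /=; apply: eq_bigr => l _.
exact: keysum.
Qed.

Lemma g2 (R : realFieldType) s x y : x != y -> 0 <= g R s x + g R s y.
Proof.
move=> nxy; rewrite /g; case: eqP => [ex|_]; case: eqP => [ey|_] //=; try lra.
by move/negP: nxy; case; apply/eqP; apply: (perm_inj (s := s)); rewrite ex ey.
Qed.

Lemma pairs_ge0 (R : realFieldType) s (f : nat -> 'I_3) n :
  (forall l, (l < 2 * n)%N -> f l != f l.+1) ->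
  0 <= \sum_(l < 2 * n) (if f l != f l.+1 then g R s (f l) else 0).
Proof.
elim: n => [|n IH] H; first by rewrite big_ord0.
have E : (2 * n.+1 = (2 * n).+2)%N by lia.
rewrite E !big_ord_recr /= -addrA; apply: addr_ge0.
  by apply: IH => l Hl; apply: H; lia.
rewrite !H; try lia.
by apply: g2; apply: H; lia.
Qed.
Lemma no_indep (R : fieldType) n r (p : 'I_n -> 'rV[R]_6) (A : 'M_(6, r))
  (b : 'rV_r) (B : 'M_(r, 6)) :
  B *m A = 1%:M -> (7 - r < n)%N -> (forall i, p i *m A = b) -> ~ aff_indep p.
Proof.
move=> BA lt Hp ind.
pose P : 'M[R]_(n, 6 + 1) := \matrix_i row_mx (p i) (1 : 'rV_1).
pose C : 'M[R]_(6 + 1, r) := col_mx A (- b).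
have PC : P *m C = 0.
  apply/row_matrixP => i; rewrite row_mul rowK mul_row_col Hp row0 mul1mx.
  by rewrite subrr.
have rC : \rank C = r.
  apply/eqP; rewrite eqn_leq rank_leq_col /=.
  have := mxrankM_maxr (row_mx B 0) C.
  by rewrite mul_row_col BA mul0mx addr0 mxrank1.
have rP : (\rank P <= 7 - r)%N.
  have : (P <= kermx C)%MS by apply/sub_kermxP.
  by move/mxrankS; rewrite mxrank_ker rC.
have : kermx P != 0.
  apply/eqP => K0; have := mxrank_ker P; rewrite K0 mxrank0; lia.
case/matrix0Pn => i0 [j0 nz].
pose u := row i0 (kermx P).
have uP : u *m P = 0 by rewrite /u -row_mul mulmx_ker row0.
have H1 : \sum_i u 0 i = 0.
  have := congr1 (fun M : 'M[R]_(1, 6 + 1) => M 0 (rshift 6 (0 : 'I_1))) uP.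
  rewrite !mxE /= => E; rewrite -[RHS]E; apply: eq_bigr => i _.
  by rewrite /P mxE row_mxEr !mxE eqxx mulr1.
have H2 : \sum_i u 0 i *: p i = 0.
  apply/rowP => j; rewrite summxE mxE.
  have := congr1 (fun M : 'M[R]_(1, 6 + 1) => M 0 (lshift 1 j)) uP.
  rewrite !mxE /= => E2; rewrite -[RHS]E2; apply: eq_bigr => i _.
  by rewrite /P mxE row_mxEl mxE.
have E3 : row i0 (kermx P) 0 j0 = kermx P i0 j0 by rewrite [LHS]mxE.
by have := ind _ H1 H2 j0; rewrite /u E3 => E4; rewrite E4 eqxx in nz.
Qed.

Fixpoint alt2 (x y z : 'I_3) n : seq 'I_3 :=
  match n with 0 => [:: z] | n'.+1 => x :: y :: alt2 x y z n' end.

Lemma size_alt2 x y z n : size (alt2 x y z n) = (2 * n).+1.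
Proof. elim: n => [|n IH] //=; rewrite IH; lia. Qed.

Lemma size_alt2b x y z n : size (alt2 x y z n) == (2 * n).+1.
Proof. by rewrite size_alt2. Qed.

Definition mkw n x y z : ((2 * n).+1).-tuple 'I_3 := Tuple (size_alt2b x y z n).

Fixpoint cs (u v : 'I_3) (s : seq 'I_3) : nat :=
  match s with
  | x :: ((y :: _) as t) => ((x == u) && (y == v)) + cs u v t
  | _ => 0 end.

Lemma xcount_cs u v s :
  \sum_(l < (size s).-1) (((nth ord0 s l == u) && (nth ord0 s l.+1 == v)) : nat) = cs u v s.
Proof.
elim: s => [|x s IH]; first by rewrite big_ord0.
case: s IH => [|y t] IH; first by rewrite big_ord0.
have -> : cs u v [:: x, y & t] = (((x == u) && (y == v)) + cs u v (y :: t))%N by [].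
by rewrite big_ord_recl -IH.
Qed.

Lemma xcount_mkw n x y z u v : xcount u v (mkw n x y z) = cs u v (alt2 x y z n).
Proof.
rewrite /xcount -xcount_cs size_alt2 /=; done.
Qed.

Lemma cs_alt2 x y z u v n : cs u v (alt2 x y z n.+1) =
  (n.+1 * ((x == u) && (y == v)) + n * ((y == u) && (x == v)) + ((y == u) && (z == v)))%N.
Proof.
elim: n => [|n IH]; first by rewrite /=; lia.
have -> : cs u v (alt2 x y z n.+2) =
   (((x == u) && (y == v)) + ((y == u) && (x == v)) + cs u v (alt2 x y z n.+1))%N.
  by rewrite /= addnA.
rewrite IH; lia.
Qed.

Lemma sorted_nth (s : seq 'I_3) : sorted (fun u v => u != v) s ->
  forall l, (l.+1 < size s)%N -> nth ord0 s l != nth ord0 s l.+1.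
Proof. by case: s => [|h t] //= /(pathP ord0) H l Hl; apply: H. Qed.

Lemma alt2_sorted x y z n : x != y -> y != z ->
  sorted (fun u v => u != v) (alt2 x y z n).
Proof.
move=> xy yz; elim: n => [|n IH] //=.
rewrite xy /=; case: n IH => [|n] /= IH; first by rewrite yz.
by move: IH => /= /andP[_ ->]; rewrite eq_sym xy.
Qed.

Lemma mkw_omega n x y z : x != y -> y != z -> omega (mkw n x y z).
Proof.
move=> xy yz; apply/forallP => l; apply/implyP => Hl.
rewrite (tnth_nth ord0); apply: (sorted_nth (alt2_sorted n xy yz)).
by rewrite size_alt2.
Qed.

Lemma omega_nth T (w : T.-tuple 'I_3) : omega w ->
  forall l, (l.+1 < T)%N -> nth ord0 w l != nth ord0 w l.+1.
Proof.
move/forallP => H l Hl; have := H (Ordinal (ltnW Hl)); rewrite /= Hl /=.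
by rewrite (tnth_nth ord0).
Qed.

Lemma avec_sum (R : realFieldType) T (w : T.-tuple 'I_3) : omega w ->
  \sum_k (avec R w) 0 k = (T.-1)%:R.
Proof.
move=> Hw; have := dot_avec w (fun _ => (1 : R)).
under eq_bigr do rewrite mul1r; move=> ->.
rewrite -[X in _ = X%:R]card_ord -sumr_const; apply: eq_bigr => l _.
rewrite omega_nth //; case: T w Hw l => [|T] w Hw l /=; first by case: l.
by rewrite ltnS.
Qed.

Lemma avec_PT (R : realFieldType) T (w : T.-tuple 'I_3) : omega w -> @PT R T (avec R w).
Proof.
move=> Hw; exists (fun w' => (w' == w)%:R); split; first by move=> w'; case: eqP.
split.
  rewrite (bigD1 w) //= eqxx big1 ?addr0 // => w' /andP[_ ne]; by rewrite (negbTE ne).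
rewrite (bigD1 w) //= eqxx scale1r big1 ?addr0 // => w' /andP[_ ne].
by rewrite (negbTE ne) scale0r.
Qed.

Lemma PT_sum (R : realFieldType) T x : @PT R T x -> \sum_k x 0 k = (T.-1)%:R.
Proof.
case=> lam [_ [Hs ->]].
under eq_bigr do rewrite summxE.
rewrite exchange_big /=.
transitivity (\sum_(w | omega w) lam w * (T.-1)%:R); last by rewrite -mulr_suml Hs mul1r.
apply: eq_bigr => w Hw.
under eq_bigr do rewrite mxE.
by rewrite -mulr_sumr avec_sum.
Qed.

Lemma valid (R : realFieldType) n s (w : ((2 * n).+1).-tuple 'I_3) :
  omega w -> 0 <= dotv (sact s (c7 R)) (avec R w).
Proof.
move=> Hw; rewrite /dotv; under eq_bigr do rewrite sactE.
rewrite dot_avec /=; apply: pairs_ge0 => l Hl; apply: omega_nth => //; lia.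
Qed.

Lemma sum_delta (R : nzRingType) (K : 'I_6) (f : 'I_6 -> R) :
  \sum_k (k == K)%:R * f k = f K.
Proof.
rewrite (bigD1 K) //= eqxx mul1r big1 ?addr0 // => k /negbTE ->.
by rewrite mul0r.
Qed.

Lemma entry (R : nzRingType) T (w : T.-tuple 'I_3) u v : u != v ->
  (avec R w) 0 (idx_of u v) = (xcount u v w)%:R.
Proof. by move=> uv; rewrite mxE pair_idx. Qed.

Lemma coord_eq (R : nzRingType) m (mu : 'I_m -> R) (p : 'I_m -> 'rV[R]_6) u v :
  \sum_i mu i *: p i = 0 -> \sum_i mu i * p i 0 (idx_of u v) = 0.
Proof.
move/(congr1 (fun M : 'rV[R]_6 => M 0 (idx_of u v))); rewrite summxE mxE => E.
by rewrite -[RHS]E; apply: eq_bigr => i _; rewrite mxE.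
Qed.

Lemma dot_sabc (R : realFieldType) s T (w : T.-tuple 'I_3) a b c :
  a != b -> a != c -> b != c ->
  dotv (sact s (c7 R)) (avec R w) =
  g R s a * (xcount a b w)%:R + g R s a * (xcount a c w)%:R
  + g R s b * (xcount b a w)%:R + g R s b * (xcount b c w)%:R
  + g R s c * (xcount c a w)%:R + g R s c * (xcount c b w)%:R.
Proof.
move=> ab ac bc; rewrite /dotv.
under eq_bigr do rewrite sactE mxE.
exact: (sumabc' (fun u v => g R s u * (xcount u v w)%:R)).
Qed.


Theorem proposition7 (R : realFieldType) (k : nat) (s : 'S_3) :
  (2 <= k)%N -> @defines_facet R (2 * k).+1 (sact s (@c7 R)).
Proof.
case: k => [|n] // _.
split; first by move=> w Hw; apply: valid.
exists 5%N.
set a := (s^-1)%g l2; set b := (s^-1)%g l1; set c := (s^-1)%g l3.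
have ab : (a == b) = false by rewrite (inj_eq perm_inj).
have ac : (a == c) = false by rewrite (inj_eq perm_inj).
have bc : (b == c) = false by rewrite (inj_eq perm_inj).
have ba : (b == a) = false by rewrite eq_sym.
have ca : (c == a) = false by rewrite eq_sym.
have cb : (c == b) = false by rewrite eq_sym.
have ga : g R s a = -1 by rewrite /g permKV eqxx.
have gb : g R s b = 1 by rewrite /g permKV.
have gc : g R s c = 1 by rewrite /g permKV.
pose W1 := mkw n.+1 a b a. pose W2 := mkw n.+1 a c a. pose W3 := mkw n.+1 a b c.
pose W4 := mkw n.+1 a c b. pose W5 := mkw n.+1 b a c. pose W6 := mkw n.+1 b c b.
have cnt x y z u v : ((xcount u v (mkw n.+1 x y z))%:R : R) =
  (n.+1 * ((x == u) && (y == v)) + n * ((y == u) && (x == v)) + ((y == u) && (z == v)))%:R.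
  by rewrite xcount_mkw cs_alt2.
have nab : a != b by rewrite ab. 
have nac : a != c by rewrite ac. 
have nbc : b != c by rewrite bc. 
have nba : b != a by rewrite ba.
have nca : c != a by rewrite ca.
have ncb : c != b by rewrite cb.
have om x y z : x != y -> y != z -> omega (mkw n.+1 x y z) by apply: mkw_omega.
split.
  split.
    exists (fun i : 'I_6 => avec R (nth W1 [:: W1; W2; W3; W4; W5; W6] i)); split.
      by move=> i; apply: avec_PT; case: i => [[|[|[|[|[|[|j]]]]]] Hj] //=; apply: om.
    move=> mu Hs Hv.
    pose m (j : nat) := mu (inord j).
    have Hmu : forall i : 'I_6, mu i = m i by move=> i; rewrite /m inord_val.
    have E u v : u != v -> \sum_(i < 6) m i * (xcount u v (nth W1 [:: W1; W2; W3; W4; W5; W6] i))%:R = 0.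
      move=> uv; rewrite -[RHS](coord_eq u v Hv); apply: eq_bigr => i _.
      by rewrite Hmu entry.
    move: Hs (E a b nab) (E a c nac) (E b a nba) (E b c nbc) (E c a nca) (E c b ncb).
    rewrite (eq_bigr _ (fun i _ => Hmu i)).
    rewrite !big_ord_recl !big_ord0 /= !cnt.
    rewrite ?eqxx ?ab ?ac ?bc ?ba ?ca ?cb /=.
    rewrite ?muln1 ?muln0 ?addn0 ?add0n ?natrD ?natrM ?mulrSr /bump /=.
    rewrite !(mulr0, addr0, mulr1, mul1r, add0r).
    set N := (n%:R : R).
    have N0 : 0 <= N by rewrite /N ler0n.
    move=> e0 e1 e2 e3 e4 e5 e6.
    have h24 : m 2 = m 4 by lra.
    have h34 : m 3 = - m 4 by lra.
    have h23 : m 2 = m 3 by lra.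
    have z4 : m 4 = 0 by lra.
    have z2 : m 2 = 0 by lra.
    have z3 : m 3 = 0 by lra.
    have z5 : m 5 = 0.
      move: e4; rewrite z2 add0r => /eqP; rewrite mulf_eq0 => /orP[/eqP //|]; lra.
    have z0 : m 0 = 0.
      move: e1; rewrite z2 z4 !mul0r !addr0 => /eqP; rewrite mulf_eq0 => /orP[/eqP //|]; lra.
    have z1 : m 1 = 0.
      move: e5; rewrite z3 !mul0r !addr0 => /eqP; rewrite mulf_eq0 => /orP[/eqP //|]; lra.
    by move=> i; rewrite Hmu; case: i => [[|[|[|[|[|[|j]]]]]] Hj].
  move=> p Hp.
  apply: (@no_indep R 7 1 p (const_mx 1) (const_mx (2 * n.+1)%:R)
            (\matrix_(i, k) (k == ord0)%:R)) => //.
    apply/matrixP => i j; rewrite !mxE.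
    under eq_bigr do rewrite !mxE mulr1.
    by rewrite !ord1 ?eqxx (bigD1 ord0) //= ?eqxx big1 ?addr0 // => k /negbTE ->.
  move=> i; apply/rowP => j; rewrite !mxE.
  under eq_bigr do rewrite mxE mulr1.
  exact: (PT_sum (Hp i)).
split.
  exists (fun i : 'I_5 => avec R (nth W1 [:: W1; W2; W3; W4; W5] i)); split.
    move=> i; case: i => [[|[|[|[|[|j]]]]] Hj] //=; (split; first by apply: avec_PT; apply: om);
      rewrite (@dot_sabc R s _ _ a b c nab nac nbc) !cnt ga gb gc;
      rewrite ?eqxx ?ab ?ac ?bc ?ba ?ca ?cb /=;
      rewrite ?muln1 ?muln0 ?addn0 ?add0n ?natrD ?natrM ?mulrSr; ring.
  move=> mu Hs Hv.
  pose m (j : nat) := mu (inord j).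
  have Hmu : forall i : 'I_5, mu i = m i by move=> i; rewrite /m inord_val.
  have E u v : u != v -> \sum_(i < 5) m i * (xcount u v (nth W1 [:: W1; W2; W3; W4; W5] i))%:R = 0.
    move=> uv; rewrite -[RHS](coord_eq u v Hv); apply: eq_bigr => i _.
    by rewrite Hmu entry.
  move: Hs (E a b nab) (E a c nac) (E b a nba) (E b c nbc) (E c a nca) (E c b ncb).
  rewrite (eq_bigr _ (fun i _ => Hmu i)).
  rewrite !big_ord_recl !big_ord0 /= !cnt.
  rewrite ?eqxx ?ab ?ac ?bc ?ba ?ca ?cb /=.
  rewrite ?muln1 ?muln0 ?addn0 ?add0n ?natrD ?natrM ?mulrSr /bump /=.
  rewrite !(mulr0, addr0, mulr1, mul1r, add0r).
  set N := (n%:R : R).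
  have N0 : 0 <= N by rewrite /N ler0n.
  move=> e0 e1 e2 e3 e4 e5 e6.
  have z2 : m 2 = 0 by lra.
  have z3 : m 3 = 0 by lra.
  have z4 : m 4 = 0 by lra.
  have z0 : m 0 = 0.
    move: e1; rewrite z2 z4 !mul0r !addr0 => /eqP; rewrite mulf_eq0 => /orP[/eqP //|]; lra.
  have z1 : m 1 = 0.
    move: e5; rewrite z3 !mul0r !addr0 => /eqP; rewrite mulf_eq0 => /orP[/eqP //|]; lra.
  by move=> i; rewrite Hmu; case: i => [[|[|[|[|[|j]]]]] Hj].
move=> p Hp.
pose A : 'M[R]_(6, 2) := \matrix_(k, j) (if j == ord0 then ((pair_of k).1 != a)%:R
                                         else ((pair_of k).1 == a)%:R).
pose B : 'M[R]_(2, 6) := \matrix_(i, k) (k == (if i == ord0 then idx_of b a else idx_of a b))%:R.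
apply: (@no_indep R 6 2 p A (const_mx (n.+1)%:R) B) => //.
  apply/matrixP => i j; rewrite !mxE /A /B.
  under eq_bigr do rewrite !mxE.
  rewrite (sum_delta _ (fun k => if j == ord0 then ((pair_of k).1 != a)%:R
                                         else ((pair_of k).1 == a)%:R)).
  case: i => [[|[|i]] Hi] //; case: j => [[|[|j]] Hj] //=; rewrite pair_idx //= ?eqxx ?ba //.
move=> i; have [HP Hd] := Hp i; have Hs := PT_sum HP.
have gE : forall u, g R s u = if u == a then -1 else 1.
  by move=> u; rewrite /g /a -[u == _](inj_eq (@perm_inj _ s)) permKV.
have Hs2 : \sum_k (p i) 0 k = \sum_k (p i) 0 k * ((pair_of k).1 != a)%:R
                            + \sum_k (p i) 0 k * ((pair_of k).1 == a)%:R.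
  rewrite -big_split; apply: eq_bigr => k _.
  by case: ((pair_of k).1 == a) => /=; rewrite ?mulr1 ?mulr0 ?addr0 ?add0r.
have Hd2 : dotv (sact s (c7 R)) (p i) = \sum_k (p i) 0 k * ((pair_of k).1 != a)%:R
                            - \sum_k (p i) 0 k * ((pair_of k).1 == a)%:R.
  rewrite /dotv -sumrB; apply: eq_bigr => k _; rewrite sactE gE.
  by case: ((pair_of k).1 == a) => /=; rewrite ?mulr1 ?mulr0 ?subr0 ?sub0r ?mulN1r ?mul1r.
move: Hs Hd Hs2 Hd2.
set S1 := \sum_k (p i) 0 k * ((pair_of k).1 != a)%:R.
set S2 := \sum_k (p i) 0 k * ((pair_of k).1 == a)%:R.
move=> Hs Hd Hs2 Hd2.
rewrite Hs /= natrM in Hs2; rewrite Hd in Hd2.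
have e1 : S1 = (n.+1)%:R by lra.
have e2 : S2 = (n.+1)%:R by lra.
apply/rowP => j; rewrite !mxE /A.
under eq_bigr do rewrite mxE.
by case: j => [[|[|j]] Hj] //=.
Qed.
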